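(* Let $\beta=\log_2(3/2)$ and \[ g(x,y)=\bigl((2x(1-x))^{1/\beta}+(x-y)^{1/\beta}\bigr)^\beta-2(x+y^2)+(x+y)^2 . \] Then $g(x,y)\ge0$ for all $x,y\in[0,1]$ with $x(2x-1)\le y\le x$. *)

(* Defs.v *)
From Stdlib Require Import Reals.
Open Scope R_scope.

(* Real power x^p for x >= 0, with the usual convention 0^p = 0 (p > 0).
   Stdlib's Rpower 0 p = exp (p * ln 0) = 1, so we patch the base 0. *)
Definition rpow (x p : R) : R :=
  if Rle_dec x 0 then 0 else Rpower x p.

Definition beta : R := ln (3/2) / ln 2.

Definition g (x y : R) : R :=
  rpow (rpow (2 * x * (1 - x)) (1 / beta) + rpow (x - y) (1 / beta)) beta
  - 2 * (x + y ^ 2) + (x + y) ^ 2.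

(* Main.v *)
Require Import Defs.
From Stdlib Require Import Reals Lra Psatz.
Open Scope R_scope.

Lemma exple (u v : R) : u <= v -> exp u <= exp v.
Proof. intros H; destruct (Rle_lt_or_eq_dec _ _ H) as [H1|H1].
  left; now apply exp_increasing. subst; lra. Qed.

Lemma lnle (u v : R) : 0 < u -> u <= v -> ln u <= ln v.
Proof. intros H0 H; destruct (Rle_lt_or_eq_dec _ _ H) as [H1|H1].
  left; now apply ln_increasing. subst; lra. Qed.

Lemma ln_le_m1 (r : R) : 0 < r -> ln r <= r - 1.
Proof. intros H. pose proof (exp_ineq1_le (ln r)). rewrite exp_ln in H0; lra. Qed.

Lemma ln2_pos : 0 < ln 2.
Proof. pose proof ln_lt_2; lra. Qed.

Lemma beta_props : 1/2 < beta < 1 /\ beta * ln 2 = ln (3/2).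
Proof.
  pose proof ln2_pos as H2.
  assert (Hl : ln (3/2) < ln 2) by (apply ln_increasing; lra).
  assert (Hm : ln 2 < 2 * ln (3/2)).
  { replace (2 * ln (3/2)) with (ln (3/2 * (3/2))).
    apply ln_increasing; lra. rewrite ln_mult; lra. }
  unfold beta; split; [split|].
  - apply Rmult_lt_reg_r with (ln 2); auto. field_simplify; lra.
  - apply Rmult_lt_reg_r with (ln 2); auto. field_simplify; lra.
  - field; lra.
Qed.

Lemma bern (r : R) : 0 < r -> exp (beta * ln r) <= 1 + beta * (r - 1).
Proof.
  intros Hr. destruct beta_props as [[Hb1 Hb2] _].
  set (m := beta * r + (1 - beta)).
  assert (Hm : 0 < m) by (unfold m; nra).
  assert (H1 := ln_le_m1 (r / m) ltac:(apply Rdiv_lt_0_compat; lra)).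
  assert (H2 := ln_le_m1 (1 / m) ltac:(apply Rdiv_lt_0_compat; lra)).
  unfold Rdiv in H1, H2. rewrite ln_mult in H1 by (auto; apply Rinv_0_lt_compat; lra).
  rewrite ln_mult in H2 by (try lra; apply Rinv_0_lt_compat; lra).
  rewrite ln_Rinv in H1, H2 by lra. rewrite ln_1 in H2.
  assert (beta * ln r - ln m <= 0).
  { assert (E : beta * (r * / m - 1) + (1 - beta) * (1 * / m - 1) = 0)
      by (unfold m in *; field; lra).
    nra. }
  replace (1 + beta * (r - 1)) with m by (unfold m; ring).
  rewrite <- (exp_ln m) by lra. apply exple; lra.
Qed.

Lemma chord (u : R) : 0 <= u <= 1 -> 1 + u / 2 <= exp (beta * ln (1 + u)).
Proof.
  intros Hu. destruct beta_props as [[Hb1 Hb2] Hbl].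
  set (t := 1 + u). set (F := exp (beta * ln t)).
  assert (Ht : 0 < t) by (unfold t; lra).
  assert (HF : 0 < F) by apply exp_pos.
  assert (B1 := bern (/ t) ltac:(apply Rinv_0_lt_compat; lra)).
  assert (B2 := bern (2 / t) ltac:(apply Rdiv_lt_0_compat; lra)).
  rewrite ln_Rinv in B1 by lra.
  unfold Rdiv in B2; rewrite ln_mult in B2 by (try lra; apply Rinv_0_lt_compat; lra).
  rewrite ln_Rinv in B2 by lra.
  replace (beta * - ln t) with (- (beta * ln t)) in B1 by ring.
  rewrite exp_Ropp in B1. fold F in B1.
  replace (beta * (ln 2 + - ln t)) with (beta * ln 2 + - (beta * ln t)) in B2 by ring.
  rewrite exp_plus, exp_Ropp, Hbl, exp_ln in B2 by lra. fold F in B2.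
  assert (C1 : 1 <= F * (1 + beta * (/ t - 1))).
  { apply Rmult_le_compat_l with (r := F) in B1; [|lra].
    rewrite Rinv_r in B1; lra. }
  assert (C2 : 3/2 <= F * (1 + beta * (2 * / t - 1))).
  { apply Rmult_le_compat_l with (r := F) in B2; [|lra].
    replace (F * (3/2 * / F)) with (3/2) in B2 by (field; lra). lra. }
  assert (E : (1 - u) * (1 + beta * (/ t - 1)) + u * (1 + beta * (2 * / t - 1)) = 1)
    by (unfold t; field; lra).
  assert (1 + u / 2 <= (1 - u) * (F * (1 + beta * (/ t - 1))) + u * (F * (1 + beta * (2 * / t - 1)))) by nra.
  nra.
Qed.

Theorem proposition2p3 (x y : R) :
  0 <= x <= 1 -> 0 <= y <= 1 -> x * (2 * x - 1) <= y <= x -> 0 <= g x y.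
Proof.
  intros Hx Hy Hxy.
  destruct beta_props as [[Hb1 Hb2] Hbl].
  set (a := 2 * x * (1 - x)). set (b := x - y).
  assert (Ha : 0 <= a) by (unfold a; nra).
  assert (Ha2 : a <= 1/2) by (unfold a; pose proof (Rle_0_sqr (2*x-1)); unfold Rsqr in *; nra).
  assert (Hb : 0 <= b <= a) by (unfold a, b; nra).
  assert (Hg : g x y = rpow (rpow a (1/beta) + rpow b (1/beta)) beta - (a + b ^ 2)).
  { unfold g; fold a; fold b. unfold a, b; ring. }
  rewrite Hg.
  assert (Hr0 : forall p, rpow 0 p = 0).
  { intros p; unfold rpow; destruct (Rle_dec 0 0); lra. }
  assert (Hrp : forall z p, 0 < z -> rpow z p = exp (p * ln z)).
  { intros z p Hz; unfold rpow; destruct (Rle_dec z 0); [lra|]. reflexivity. }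
  destruct (Rle_lt_or_eq_dec 0 b (proj1 Hb)) as [Hbp|Hb0].
  2:{ rewrite <- Hb0. rewrite Hr0, Rplus_0_r.
      destruct (Rle_lt_or_eq_dec 0 a Ha) as [Hap|Ha0].
      - rewrite (Hrp a) by lra. rewrite Hrp by apply exp_pos.
        rewrite ln_exp. replace (beta * (1 / beta * ln a)) with (ln a) by (field; lra).
        rewrite exp_ln by lra. lra.
      - rewrite <- Ha0, !Hr0. lra. }
  assert (Hap : 0 < a) by lra.
  set (p := 1 / beta).
  set (la := ln a). set (lb := ln b).
  assert (Hlab : lb <= la) by (apply lnle; lra).
  assert (Hla : la <= - ln 2).
  { rewrite <- ln_Rinv by lra. apply lnle; lra. }
  assert (Hp2 : p < 2).
  { unfold p. apply Rmult_lt_reg_r with beta; [lra|]. field_simplify; lra. }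
  assert (Hp1 : 1 < p).
  { unfold p. apply Rmult_lt_reg_r with beta; [lra|]. field_simplify; lra. }
  rewrite (Hrp a) by lra. rewrite (Hrp b) by lra.
  rewrite Hrp by (pose proof (exp_pos (p * ln a)); pose proof (exp_pos (p * ln b)); lra).
  fold la lb.
  set (u := exp (p * (lb - la))).
  assert (Hu : 0 <= u <= 1).
  { split. left; apply exp_pos. rewrite <- exp_0. apply exple. nra. }
  assert (Hsum : exp (p * la) + exp (p * lb) = exp (p * la) * (1 + u)).
  { unfold u. rewrite Rmult_plus_distr_l, Rmult_1_r, <- exp_plus. do 2 f_equal. ring. }
  rewrite Hsum, ln_mult, ln_exp by (try apply exp_pos; lra).
  rewrite Rmult_plus_distr_l, exp_plus.
  replace (beta * (p * la)) with la by (unfold p; field; lra).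
  assert (Hc := chord u Hu).
  unfold la at 1; rewrite exp_ln by lra.
  assert (Hau : a * u = exp (la + p * (lb - la))).
  { unfold u; rewrite exp_plus; unfold la; rewrite exp_ln by lra; reflexivity. }
  assert (Hbb : 2 * b ^ 2 <= a * u).
  { rewrite Hau. replace (2 * b ^ 2) with (exp (ln 2 + 2 * lb)).
    - apply exple. nra.
    - rewrite exp_plus, exp_ln by lra. replace (2 * lb) with (lb + lb) by ring.
      rewrite exp_plus. unfold lb; rewrite exp_ln by lra. ring. }
  nra.
Qed.
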